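(* Let $F$ be the elementary cellular automaton with rule number 7. For every nonempty finite word $u\in\{0,1\}^*$, the deterministic communication complexity of $\textsc{SInv}_{F,u}$ restricted to inputs of length $n$ is bounded by a constant independent of $n$.
   Context: An elementary cellular automaton (ECA) with rule number $N\in\{0,\dots,255\}$ is the map $F:\{0,1\}^{\mathbb Z}\to\{0,1\}^{\mathbb Z}$ given by $F(x)_i=f(x_{i-1},x_i,x_{i+1})$. Here the local rule $f:\{0,1\}^3\to\{0,1\}$ is determined by $N=\sum_{a,b,c\in\{0,1\}}2^{4a+2b+c}f(a,b,c)$. For a nonempty finite word $u$, $p_u\in\{0,1\}^{\mathbb Z}$ is defined by $(p_u)_i=u_{i\bmod |u|}$. For a finite word $x$, $p_u[x]$ is the configuration equal to $x$ on positions $0,\dots,|x|-1$ and to $p_u$ elsewhere. $\textsc{SInv}_{F,u}$ is the decision problem: on input a finite word $x$, decide whether there is an integer $w$ such that for all $t\ge0$ the set of positions where $F^t(p_u)$ and $F^t(p_u[x])$ differ is contained in an interval of length $w$. For each $n$, it is regarded as a function $\{0,1\}^n\to\{0,1\}$. For a function $g:X\times Y\to Z$, $D(g)$ is the minimal depth of a deterministic two-party protocol computing $g$. In such a protocol, Alice knows $x$ and Bob knows $y$. The protocol is a binary tree: each internal node is labelled by a function of Alice's input only or of Bob's input only, with values in $\{\text{left},\text{right}\}$, and each leaf is labelled by an output value. For $g:\{0,1\}^m\to Z$, set $D(g)=\max_{0\le i<m}D(g_i)$, where $g_i:\{0,1\}^i\times\{0,1\}^{m-i}\to Z$ is $g_i(x,y)=g(xy)$.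 *)

(* Defs.v *)
From Stdlib Require Import ZArith List Arith Bool.
Import ListNotations.
Open Scope Z_scope.

Definition config := Z -> bool.

Definition local_rule (N : nat) (a b c : bool) : bool :=
  Nat.testbit N (4 * Nat.b2n a + 2 * Nat.b2n b + Nat.b2n c)%nat.

Definition eca (N : nat) (x : config) : config :=
  fun i => local_rule N (x (i - 1)) (x i) (x (i + 1)).

Definition eca_iter (N : nat) (t : nat) (x : config) : config :=
  Nat.iter t (eca N) x.

Definition periodic (u : list bool) : config :=
  fun i => nth (Z.to_nat (i mod Z.of_nat (length u))) u false.

Definition perturb (u x : list bool) : config :=
  fun i => if andb (0 <=? i) (i <? Z.of_nat (length x))
           then nth (Z.to_nat i) x false
           else periodic u i.

Definition SInv (N : nat) (u x : list bool) : Prop :=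
  exists w : nat, forall t : nat, exists a : Z, forall i : Z,
    eca_iter N t (periodic u) i <> eca_iter N t (perturb u x) i ->
    a <= i < a + Z.of_nat w.

Inductive protocol (X Y : Type) : Type :=
  | Leaf : bool -> protocol X Y
  | AliceNode : (X -> bool) -> protocol X Y -> protocol X Y -> protocol X Y
  | BobNode : (Y -> bool) -> protocol X Y -> protocol X Y -> protocol X Y.

Arguments Leaf {X Y} _.
Arguments AliceNode {X Y} _ _ _.
Arguments BobNode {X Y} _ _ _.

Fixpoint run {X Y : Type} (p : protocol X Y) (x : X) (y : Y) : bool :=
  match p with
  | Leaf b => b
  | AliceNode f l r => if f x then run l x y else run r x y
  | BobNode g l r => if g y then run l x y else run r x y
  end.

Fixpoint depth {X Y : Type} (p : protocol X Y) : nat :=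
  match p with
  | Leaf _ => 0
  | AliceNode _ l r => S (Nat.max (depth l) (depth r))
  | BobNode _ l r => S (Nat.max (depth l) (depth r))
  end.

Definition cc_split_le (N : nat) (u : list bool) (n i C : nat) : Prop :=
  exists p : protocol (list bool) (list bool),
    (depth p <= C)%nat /\
    forall x y : list bool, length x = i -> length y = (n - i)%nat ->
      (run p x y = true <-> SInv N u (x ++ y)).

(* D(SInv_{F,u} restricted to {0,1}^n) <= C, i.e. max over 0 <= i < n. *)
Definition cc_le (N : nat) (u : list bool) (n C : nat) : Prop :=
  forall i : nat, (i < n)%nat -> cc_split_le N u n i C.

(* Main.v *)
Require Import Defs.
From Stdlib Require Import ZArith List Arith Bool Lia FunctionalExtensionality Classical ClassicalEpsilon.
Import ListNotations.
Open Scope Z_scope.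

Definition F7 (x : config) : config := fun i => negb (x (i-1)) && negb (x i && x (i+1)).
Lemma eca7 : eca 7 = F7.
Proof. apply functional_extensionality; intro x; apply functional_extensionality; intro i.
unfold eca, F7, local_rule. destruct (x (i-1)), (x i), (x (i+1)); reflexivity. Qed.
Definition Hs (x : config) : config := F7 (F7 x).
Definition g5 (a b c d e : bool) := if c then b || d else (negb a && negb b) || (negb b && negb d) || (negb d && negb e).
Definition goodb (x : config) i := g5 (x (i-2)) (x (i-1)) (x i) (x (i+1)) (x (i+2)).

Ltac bf w := repeat match goal with |- context [w ?k] => destruct (w k) end.

Lemma L1_0 (w : config) : goodb w 0 = true -> goodb (Hs w) 1 = true /\ goodb (Hs w) 2 = true.
Proof. unfold goodb, Hs, F7, g5. simpl. bf w; simpl; intuition congruence. Qed.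
Lemma L2_0 (w : config) : w 0 = w 1 -> goodb (Hs w) 2 || goodb (Hs w) 3 = true.
Proof. unfold goodb, Hs, F7, g5. simpl. bf w; simpl; intuition congruence. Qed.
Lemma L3_0 (w : config) : goodb w (-1) = true -> goodb w 0 = true -> goodb w 1 = true -> Hs w 0 = w (-1).
Proof. unfold goodb, Hs, F7, g5. simpl. bf w; simpl; intuition congruence. Qed.
Lemma L4_0 (w : config) : w (-1) = negb (w (-2)) -> w 0 = negb (w (-1)) -> w 1 = negb (w 0) -> w 2 = negb (w 1) ->
  Hs w 0 = w 0 /\ goodb w 0 = false.
Proof. unfold goodb, Hs, F7, g5. simpl. bf w; simpl; intuition congruence. Qed.

Definition tr (x : config) (i : Z) : config := fun k => x (i + k).
Lemma F7_tr x i : F7 (tr x i) = tr (F7 x) i.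
Proof. apply functional_extensionality; intro k; unfold F7, tr.
  replace (i + (k-1)) with (i+k-1) by ring; replace (i + (k+1)) with (i+k+1) by ring; reflexivity. Qed.
Lemma Hs_tr x i : Hs (tr x i) = tr (Hs x) i.
Proof. unfold Hs; rewrite !F7_tr; reflexivity. Qed.
Lemma good_tr x i k : goodb (tr x i) k = goodb x (i + k).
Proof. unfold goodb, tr.
  replace (i + (k-2)) with (i+k-2) by ring; replace (i + (k-1)) with (i+k-1) by ring;
  replace (i + (k+1)) with (i+k+1) by ring; replace (i + (k+2)) with (i+k+2) by ring; reflexivity. Qed.

Lemma L1 x i : goodb x i = true -> goodb (Hs x) (i+1) = true /\ goodb (Hs x) (i+2) = true.
Proof. intro G. pose proof (L1_0 (tr x i)) as E. rewrite Hs_tr, !good_tr, Z.add_0_r in E. auto. Qed.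
Lemma L2 x c : x c = x (c+1) -> goodb (Hs x) (c+2) = true \/ goodb (Hs x) (c+3) = true.
Proof. intro G. pose proof (L2_0 (tr x c)) as E. rewrite Hs_tr, !good_tr in E. unfold tr in E.
  rewrite Z.add_0_r in E. apply orb_true_iff. auto. Qed.
Lemma L3 y : (forall i, goodb y i = true) -> forall i, Hs y i = y (i-1).
Proof. intros G i. pose proof (L3_0 (tr y i)) as E. rewrite Hs_tr, !good_tr in E. unfold tr in E.
  rewrite Z.add_0_r in E. replace (i-1) with (i + -1) by ring. apply E; auto. Qed.
Lemma L4 p : (forall j, p (j+1) = negb (p j)) -> forall i, Hs p i = p i /\ goodb p i = false.
Proof. intros A i. pose proof (L4_0 (tr p i)) as E. rewrite Hs_tr, !good_tr in E. unfold tr in E.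
  rewrite Z.add_0_r in E. apply E.
  - replace (i + -1) with (i + -2 + 1) by ring; apply A.
  - replace i with (i + -1 + 1) at 1 by ring; apply A.
  - apply A.
  - replace (i+2) with (i + 1 + 1) by ring; apply A. Qed.

Lemma iter_add {A} (f : A -> A) a b x : Nat.iter (a+b) f x = Nat.iter a f (Nat.iter b f x).
Proof. induction a; simpl; congruence. Qed.
Lemma iter_2k y k : Nat.iter (2*k) F7 y = Nat.iter k Hs y.
Proof. induction k. reflexivity. replace (2 * S k)%nat with (S (S (2*k))) by lia.
  change (F7 (F7 (Nat.iter (2*k) F7 y)) = Hs (Nat.iter k Hs y)). rewrite IHk. reflexivity. Qed.
Lemma eca_iter_F7 t y : eca_iter 7 t y = Nat.iter t F7 y.
Proof. unfold eca_iter; rewrite eca7; reflexivity. Qed.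

Lemma F7_diff x y i : F7 x i <> F7 y i -> x(i-1) <> y(i-1) \/ x i <> y i \/ x(i+1) <> y(i+1).
Proof. unfold F7. intro D. destruct (bool_dec (x (i-1)) (y (i-1))); auto.
  destruct (bool_dec (x i) (y i)); auto. destruct (bool_dec (x (i+1)) (y (i+1))); auto.
  exfalso; apply D; congruence. Qed.

Lemma cone x y a b : (forall j, x j <> y j -> a <= j < b) -> forall t i,
  Nat.iter t F7 x i <> Nat.iter t F7 y i -> a - Z.of_nat t <= i < b + Z.of_nat t.
Proof. intros D t. induction t; intros i E.
  - simpl in *. specialize (D i E). lia.
  - simpl in E. apply F7_diff in E. rewrite Nat2Z.inj_succ.
    destruct E as [E|[E|E]]; apply IHt in E; lia. Qed.

Lemma good_agree x y j : (forall k, j-2 <= k <= j+2 -> x k = y k) -> goodb x j = goodb y j.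
Proof. intro E. unfold goodb. rewrite !E by lia. reflexivity. Qed.

Lemma spread : forall k y j, goodb y j = true -> forall d, Z.of_nat k <= d <= 2 * Z.of_nat k ->
  goodb (Nat.iter k Hs y) (j + d) = true.
Proof. induction k; intros y j G d Hd.
  - simpl in *. replace (j+d) with j by lia. exact G.
  - rewrite Nat2Z.inj_succ in Hd. simpl.
    destruct (Z_le_gt_dec d (2 * Z.of_nat k + 1)).
    + pose proof (IHk y j G (d-1) ltac:(lia)) as E. apply L1 in E.
      replace (j+d) with (j + (d-1) + 1) by ring. apply E.
    + pose proof (IHk y j G (d-2) ltac:(lia)) as E. apply L1 in E.
      replace (j+d) with (j + (d-2) + 2) by ring. apply E. Qed.

Lemma allgood (y : config) (L lo hi : Z) (K : nat) : 0 < L -> lo <= hi -> Z.of_nat K = hi - lo + 2*L ->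
  (forall s, s + L <= lo \/ hi <= s -> exists j, s <= j < s + L /\ goodb y j = true) ->
  forall i, goodb (Nat.iter K Hs y) i = true.
Proof. intros HL Hlh HK W i.
  destruct (Z_le_gt_dec i (lo + 2 * Z.of_nat K - L)).
  - destruct (W (i - 2 * Z.of_nat K) ltac:(lia)) as [j [Hj G]].
    replace i with (j + (i - j)) by ring. apply spread; auto; lia.
  - destruct (W (i - Z.of_nat K - L + 1) ltac:(lia)) as [j [Hj G]].
    replace i with (j + (i - j)) by ring. apply spread; auto; lia. Qed.

Lemma shift_phase y : (forall i, goodb y i = true) -> forall j,
  (forall i, goodb (Nat.iter j Hs y) i = true) /\ forall i, Nat.iter j Hs y i = y (i - Z.of_nat j).
Proof. intros G j. induction j.
  - split; auto. intro i; simpl. f_equal; lia.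
  - destruct IHj as [G1 E1]. simpl. split.
    + intro i. replace i with (i - 1 + 1) by ring. apply L1, G1.
    + intro i. rewrite L3 by auto. rewrite E1. f_equal; lia. Qed.

Lemma per_p u : u <> nil -> forall i, periodic u (i + Z.of_nat (length u)) = periodic u i.
Proof. intros Hu i. unfold periodic. replace (i + Z.of_nat (length u)) with (i + 1 * Z.of_nat (length u)) by ring.
  rewrite Z_mod_plus_full. reflexivity. Qed.
Lemma per_F7 (y : config) L : (forall i, y (i+L) = y i) -> forall i, F7 y (i+L) = F7 y i.
Proof. intros P i. unfold F7. replace (i+L-1) with (i-1+L) by ring. replace (i+L+1) with (i+1+L) by ring.
  rewrite !P. reflexivity. Qed.
Lemma per_Hs (y : config) L : (forall i, y (i+L) = y i) -> forall i, Hs y (i+L) = Hs y i.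
Proof. intros P. unfold Hs. apply per_F7, per_F7, P. Qed.
Lemma per_good (y : config) L : (forall i, y (i+L) = y i) -> forall i, goodb y (i+L) = goodb y i.
Proof. intros P i. unfold goodb.
  replace (i+L-2) with (i-2+L) by ring. replace (i+L-1) with (i-1+L) by ring.
  replace (i+L+1) with (i+1+L) by ring. replace (i+L+2) with (i+2+L) by ring. rewrite !P. reflexivity. Qed.
Lemma per_mult (f : Z -> bool) L : (forall i, f (i+L) = f i) -> forall m i, f (i + m*L) = f i.
Proof. intros P.
  assert (N : forall n : nat, forall i, f (i + Z.of_nat n * L) = f i).
  { induction n; intro i. simpl. f_equal; ring.
    rewrite Nat2Z.inj_succ. replace (i + Z.succ (Z.of_nat n) * L) with (i + Z.of_nat n * L + L) by ring.
    rewrite P. apply IHn. }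
  intros m i. destruct (Z_le_gt_dec 0 m).
  - rewrite <- (Z2Nat.id m) by lia. apply N.
  - rewrite <- (N (Z.to_nat (-m)) (i + m*L)). f_equal. rewrite Z2Nat.id by lia. ring. Qed.

Lemma pert_diff u x j : periodic u j <> perturb u x j -> 0 <= j < Z.of_nat (length x).
Proof. unfold perturb. destruct ((0 <=? j) && (j <? Z.of_nat (length x))) eqn:E.
  - intros _. apply andb_true_iff in E. destruct E as [E1 E2]. apply Z.leb_le in E1. apply Z.ltb_lt in E2. lia.
  - intro D; exfalso; apply D; reflexivity. Qed.

Lemma iter_S {A} (f : A -> A) m x : Nat.iter (S m) f x = f (Nat.iter m f x).
Proof. reflexivity. Qed.

Lemma partA u x : u <> nil -> (exists c, periodic u c = periodic u (c+1)) -> SInv 7 u x.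
Proof.
  intros Hu [c Hc].
  set (p := periodic u). set (q := perturb u x).
  set (n := Z.of_nat (length x)). set (L := Z.of_nat (length u)).
  assert (HL : 0 < L). { unfold L. destruct u. congruence. simpl. lia. }
  assert (Pp : forall i, p (i + L) = p i) by (apply per_p; auto).
  assert (PG : forall i, goodb (Hs p) (i + L) = goodb (Hs p) i) by (apply per_good, per_Hs, Pp).
  assert (Hg : exists g, goodb (Hs p) g = true).
  { destruct (L2 p c Hc) as [G|G]; eexists; exact G. }
  destruct Hg as [g Hg].
  assert (Wp : forall s, exists j, s <= j < s + L /\ goodb (Hs p) j = true).
  { intro s. exists (s + (g - s) mod L). pose proof (Z.mod_pos_bound (g-s) L HL).
    pose proof (Z.div_mod (g-s) L ltac:(lia)). split. lia.
    rewrite <- Hg. rewrite <- (per_mult _ L PG (- ((g-s)/L)) g). f_equal. lia. }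
  assert (Dq : forall j, p j <> q j -> 0 <= j < n) by (intros; eapply pert_diff; eauto).
  assert (Cone0 : forall t i, Nat.iter t F7 p i <> Nat.iter t F7 q i -> - Z.of_nat t <= i < n + Z.of_nat t).
  { intros t i D. apply (cone p q 0 n Dq) in D. lia. }
  assert (D1 : forall i, Hs p i <> Hs q i -> -2 <= i < n + 2).
  { intros i D. apply (Cone0 2%nat i) in D. simpl in D. lia. }
  assert (Wq : forall s, s + L <= -4 \/ n + 4 <= s -> exists j, s <= j < s + L /\ goodb (Hs q) j = true).
  { intros s Hs0. destruct (Wp s) as [j [Hj G]]. exists j. split; auto.
    rewrite <- G. symmetry. apply good_agree. intros k Hk.
    destruct (bool_dec (Hs p k) (Hs q k)) as [e|e]; auto. apply D1 in e. lia. }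
  assert (Wp' : forall s, s + L <= -4 \/ n + 4 <= s -> exists j, s <= j < s + L /\ goodb (Hs p) j = true)
    by (intros; apply Wp).
  set (K := Z.to_nat (n + 8 + 2 * L)).
  assert (HK : Z.of_nat K = (n + 4) - (-4) + 2 * L) by (unfold K; rewrite Z2Nat.id; lia).
  assert (AP := allgood (Hs p) L (-4) (n+4) K HL ltac:(lia) HK Wp').
  assert (AQ := allgood (Hs q) L (-4) (n+4) K HL ltac:(lia) HK Wq).
  pose proof (shift_phase _ AP) as SP. pose proof (shift_phase _ AQ) as SQ.
  set (T0 := (2 * (K + 1))%nat).
  assert (key : forall y j, Nat.iter (T0 + 2 * j) F7 y = Nat.iter j Hs (Nat.iter K Hs (Hs y))).
  { intros y j. replace (T0 + 2*j)%nat with (2 * (j + (K + 1)))%nat by (unfold T0; lia).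
    rewrite iter_2k, iter_add, iter_add. reflexivity. }
  assert (key0 : forall y, Nat.iter T0 F7 y = Nat.iter K Hs (Hs y)).
  { intro y. pose proof (key y 0%nat) as E. simpl Nat.iter in E at 2. rewrite <- E. f_equal. lia. }
  assert (EV : forall j i, Nat.iter (T0 + 2*j) F7 p i <> Nat.iter (T0 + 2*j) F7 q i ->
     - Z.of_nat T0 <= i - Z.of_nat j < n + Z.of_nat T0).
  { intros j i D. rewrite !key in D. rewrite (proj2 (SP j)), (proj2 (SQ j)) in D.
    rewrite <- !key0 in D. apply Cone0 in D. lia. }
  exists (length x + 2 * T0 + 2)%nat. intro t. rewrite !eca_iter_F7. fold p q.
  destruct (lt_dec t T0).
  - exists (- Z.of_nat t). intros i D. apply Cone0 in D. unfold n in D. lia.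
  - destruct (Nat.Even_or_Odd (t - T0)) as [[j Hj]|[j Hj]];
    exists (Z.of_nat j - Z.of_nat T0 - 1).
    + replace t with (T0 + 2*j)%nat by lia. intros i D. apply EV in D. unfold n in D. lia.
    + replace t with (S (T0 + 2*j))%nat by lia. intros i D. rewrite !iter_S in D.
      apply F7_diff in D. destruct D as [D|[D|D]]; apply EV in D; unfold n in D; lia.
Qed.

Lemma partB u w : u <> nil -> (forall j, periodic u (j+1) = negb (periodic u j)) ->
  (SInv 7 u w <-> forall j, (j < length w)%nat -> nth j w false = periodic u (Z.of_nat j)).
Proof.
  intros Hu A. set (p := periodic u). set (q := perturb u w).
  assert (Hp : Hs p = p).
  { apply functional_extensionality; intro i. apply (L4 p A i). }
  assert (Hpk : forall k, Nat.iter k Hs p = p).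
  { induction k. reflexivity. rewrite iter_S, IHk. exact Hp. }
  split.
  - intros [w0 SI]. apply NNPP. intro NP.
    apply not_all_ex_not in NP. destruct NP as [j NP].
    apply imply_to_and in NP. destruct NP as [Hj NP].
    assert (Qj : q (Z.of_nat j) <> p (Z.of_nat j)).
    { unfold q, perturb. destruct ((0 <=? Z.of_nat j) && (Z.of_nat j <? Z.of_nat (length w))) eqn:E.
      - rewrite Nat2Z.id. exact NP.
      - exfalso. apply andb_false_iff in E. destruct E as [E|E].
        apply Z.leb_gt in E; lia. apply Z.ltb_ge in E; lia. }
    assert (Hc : exists c, q c = q (c+1)).
    { apply NNPP. intro NC.
      assert (Aq : forall c, q (c+1) = negb (q c)).
      { intro c. destruct (bool_dec (q c) (q (c+1))) as [e|e].
        exfalso; apply NC; eauto. destruct (q c), (q (c+1)); simpl in *; congruence. }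
      assert (M : forall m : nat, q (-1 + Z.of_nat m) = p (-1 + Z.of_nat m)).
      { induction m.
        - simpl. destruct (bool_dec (p (-1)) (q (-1))) as [e|e]. auto.
          apply pert_diff in e. lia.
        - rewrite Nat2Z.inj_succ. replace (-1 + Z.succ (Z.of_nat m)) with (-1 + Z.of_nat m + 1) by ring.
          rewrite Aq, A, IHm. reflexivity. }
      apply Qj. replace (Z.of_nat j) with (-1 + Z.of_nat (S j)) by lia. apply M. }
    destruct Hc as [c Hc].
    assert (Hg : exists g, goodb (Hs q) g = true).
    { destruct (L2 q c Hc) as [G|G]; eexists; exact G. }
    destruct Hg as [g Hg].
    set (k := (w0 + 5)%nat).
    assert (Dd : forall d, Z.of_nat k <= d <= 2 * Z.of_nat k -> exists e, -2 <= e <= 2 /\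
       eca_iter 7 (2 * (k+1)) p (g + d + e) <> eca_iter 7 (2 * (k+1)) q (g + d + e)).
    { intros d Hd. pose proof (spread k (Hs q) g Hg d Hd) as G.
      rewrite eca_iter_F7, eca_iter_F7, !iter_2k, Hpk.
      replace (Nat.iter (k+1) Hs q) with (Nat.iter k Hs (Hs q)) by (rewrite iter_add; reflexivity).
      apply NNPP. intro NE.
      assert (E : goodb p (g+d) = goodb (Nat.iter k Hs (Hs q)) (g+d)).
      { apply good_agree. intros m Hm. destruct (bool_dec (p m) (Nat.iter k Hs (Hs q) m)) as [e|e]; auto.
        exfalso; apply NE. exists (m - (g+d)). split. lia. replace (g + d + (m - (g+d))) with m by ring. exact e. }
      rewrite (proj2 (L4 p A (g+d))), G in E. discriminate. }
    destruct (SI (2 * (k+1))%nat) as [a Sa].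
    destruct (Dd (Z.of_nat k) ltac:(lia)) as [e1 [He1 D1]].
    destruct (Dd (2 * Z.of_nat k) ltac:(lia)) as [e2 [He2 D2]].
    apply Sa in D1. apply Sa in D2. unfold k in *. lia.
  - intro P. exists 0%nat. intro t. exists 0. intros i D. exfalso. apply D.
    f_equal. apply functional_extensionality. intro z. unfold q, perturb.
    destruct ((0 <=? z) && (z <? Z.of_nat (length w))) eqn:E; [|reflexivity].
    apply andb_true_iff in E. destruct E as [E1 E2]. apply Z.leb_le in E1. apply Z.ltb_lt in E2.
    rewrite P by lia. rewrite Z2Nat.id by lia. reflexivity.
Qed.

Definition dec (P : Prop) : bool := if excluded_middle_informative P then true else false.
Lemma dec_true P : dec P = true <-> P.
Proof. unfold dec. destruct (excluded_middle_informative P); split; auto; discriminate. Qed.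

Lemma proto2 u n i (A B : list bool -> Prop) :
  (forall x y, length x = i -> length y = (n - i)%nat -> (SInv 7 u (x ++ y) <-> A x /\ B y)) ->
  cc_split_le 7 u n i 2.
Proof. intro E. exists (AliceNode (fun x => dec (A x)) (BobNode (fun y => dec (B y)) (Leaf true) (Leaf false)) (Leaf false)).
  split. simpl. lia. intros x y Hx Hy. rewrite E by auto. simpl.
  destruct (dec (A x)) eqn:EA; destruct (dec (B y)) eqn:EB.
  - rewrite dec_true in EA, EB. tauto.
  - split; [discriminate|]. intros [_ b]. apply dec_true in b. congruence.
  - split; [discriminate|]. intros [a _]. apply dec_true in a. congruence.
  - split; [discriminate|]. intros [a _]. apply dec_true in a. congruence.
Qed.

Lemma proto0 u n i : (forall x y, SInv 7 u (x ++ y)) -> cc_split_le 7 u n i 2.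
Proof. intro E. exists (Leaf true). split. simpl. lia. intros; simpl. split; auto. Qed.

Theorem mainTheorem4 :
  forall u : list bool, u <> nil ->
    exists C : nat, forall n : nat, cc_le 7 u n C.
Proof.
  intros u Hu. exists 2%nat. intros n i Hi.
  destruct (classic (forall j, periodic u (j+1) = negb (periodic u j))) as [A|NA].
  - apply proto2 with (A := fun x => forall j, (j < length x)%nat -> nth j x false = periodic u (Z.of_nat j))
                      (B := fun y => forall j, (j < length y)%nat -> nth j y false = periodic u (Z.of_nat (i + j))).
    intros x y Hx Hy. rewrite partB by auto. split.
    + intro P. split.
      * intros j Hj. rewrite <- P by (rewrite length_app; lia). rewrite app_nth1 by lia. reflexivity.
      * intros j Hj. rewrite <- P by (rewrite length_app; lia). rewrite app_nth2 by lia.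
        f_equal. lia.
    + intros [PA PB] j Hj. rewrite length_app in Hj. destruct (lt_dec j (length x)).
      * rewrite app_nth1 by lia. auto.
      * rewrite app_nth2 by lia. rewrite PB by lia. f_equal. lia.
  - apply proto0. intros x y. apply partA; auto.
    apply not_all_ex_not in NA. destruct NA as [c NA]. exists c.
    destruct (periodic u c), (periodic u (c+1)); simpl in *; congruence.
Qed.
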